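(* Let $(e_n)_{n\in N}$ and $(e'_n)_{n\in N'}$ be normalised bimonotone unconditional basic sequences, $X=\overline{\mathrm{span}}\{e_n\}$, $X'=\overline{\mathrm{span}}\{e'_n\}$. Then every homeomorphism $T:P(X)\to P(X')$ maps $X$ onto $X'$, the hair of $P(X)$ onto the hair of $P(X')$, the set of roots of $P(X)$ onto the set of roots of $P(X')$, and for each $n$ the set of type $t_n$ vectors of $X$ onto the set of type $t_n$ vectors of $X'$.
   Context: A type is a non-empty finite non-decreasing sequence of strictly positive rationals; $x\in X$ has type $(\lambda_1,\dots,\lambda_m)$ if $x=\sum_{i=1}^m\lambda_ie_{\sigma(i)}$ for an injection $\sigma:\{1,\dots,m\}\to N$. Enumerate the types as $(t_n)_{n\ge1}$ with $t_1=(1)$; $T_n$ is the set of vectors of type $t_n$. $H_n$ is the metric space obtained by gluing $n$ isometric copies of $[0,1]$ at a common endpoint $0_n$. For $x\in T_n$, $H(x)$ is an isometric copy of $H_n$ (metric $d_x$) with special point identified with $x$, $H^0(x)=H(x)\setminus\{x\}$. $P(X)=X\sqcup\bigsqcup_n\bigsqcup_{x\in T_n}H^0(x)$ with metric $d$: $d=d_X$ on $X$; $d=d_x$ on $H^0(x)$; $d(y,z)=d_X(y,x)+d_x(x,z)$ for $y\in X,z\in H^0(x)$; $d(y,z)=d_x(y,x)+d_X(x,x')+d_{x'}(x',z)$ for $y\in H^0(x),z\in H^0(x')$, $x\neq x'$. The set of roots is $R=\bigcup_nT_n$ and the hair is $\bigcup_{x\in R}H^0(x)$. The same construction applied to $X'$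 gives $P(X')$. *)

(* Defs.v *)
From HB Require Import structures.
From mathcomp Require Import all_boot all_order all_algebra.
From mathcomp Require Import all_classical all_reals all_analysis.
Set Implicit Arguments. Unset Strict Implicit. Unset Printing Implicit Defensive.
Import Order.TTheory GRing.Theory Num.Theory.
Import numFieldNormedType.Exports.
Local Open Scope classical_set_scope.
Local Open Scope ring_scope.

Section Defs.
Variables (R : realType) (V : normedModType R).

Definition lin_span (e : nat -> V) (N : set nat) : set V :=
  [set x | exists (s : seq nat) (c : nat -> R),
     (forall n, n \in s -> N n) /\ x = \sum_(n <- s) c n *: e n].

Definition closed_span (e : nat -> V) (N : set nat) : set V :=
  closure (lin_span e N).

Definition expansion (e : nat -> V) (N : set nat) (a : nat -> R) (x : V) : Prop :=
  (forall n, ~ N n -> a n = 0) /\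
  (fun k : nat => \sum_(0 <= n < k) a n *: e n) @ \oo --> x.

Definition basic_seq (e : nat -> V) (N : set nat) : Prop :=
  (forall n, N n -> e n != 0) /\
  (forall x, closed_span e N x -> exists! a, expansion e N a x).

Definition normalised (e : nat -> V) (N : set nat) : Prop :=
  forall n, N n -> `|e n| = 1.

Definition unconditional (e : nat -> V) (N : set nat) : Prop :=
  forall x a, closed_span e N x -> expansion e N a x ->
    forall p : nat -> nat, bijective p ->
      (fun k : nat => \sum_(0 <= n < k) a (p n) *: e (p n)) @ \oo --> x.

Definition bimonotone (e : nat -> V) (N : set nat) : Prop :=
  forall x a, closed_span e N x -> expansion e N a x -> forall k : nat,
    `|\sum_(0 <= n < k) a n *: e n| <= `|x| /\
    `|x - \sum_(0 <= n < k) a n *: e n| <= `|x|.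

Definition nbu_basic_seq (e : nat -> V) (N : set nat) : Prop :=
  [/\ basic_seq e N, normalised e N, unconditional e N & bimonotone e N].

Definition has_type (e : nat -> V) (N : set nat) (lam : seq rat) (x : V) : Prop :=
  exists sigma : 'I_(size lam) -> nat,
    injective sigma /\ (forall i, N (sigma i)) /\
    x = \sum_(i < size lam) (ratr (nth 0 lam i) : R) *: e (sigma i).

End Defs.

Definition is_type (lam : seq rat) : Prop :=
  lam != [::] /\ sorted <=%R lam /\ all (fun q => 0 < q) lam.

Definition type_enum (t : nat -> seq rat) : Prop :=
  [/\ forall n, (0 < n)%N -> is_type (t n),
      forall lam, is_type lam -> exists! n, (0 < n)%N /\ t n = lam
    & t 1%N = [:: 1]].

(** points of P(X): either a point x of X, or a point of the hair H^0(x)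
    at root x in T_n: leg i (0 <= i < n), at distance s in (0,1] from x *)
Inductive ppoint (R : Type) (V : Type) :=
| PBase of V
| PHair of nat & V & nat & R.
Arguments PBase {R V}.
Arguments PHair {R V}.

Section PX.
Variables (R : realType) (V : normedModType R).
Variables (t : nat -> seq rat) (e : nat -> V) (N : set nat).

Definition Tset (n : nat) : set V :=
  [set x | closed_span e N x /\ has_type e N (t n) x].

Definition Pcarrier : set (ppoint R V) :=
  [set p | match p with
   | PBase x => closed_span e N x
   | PHair n x i s => [/\ (0 < n)%N, Tset n x, (i < n)%N & 0 < s <= 1]
   end].

Definition Pdist (p q : ppoint R V) : R :=
  match p, q with
  | PBase y, PBase z => `|y - z|
  | PBase y, PHair _ x _ s => `|y - x| + s
  | PHair _ x _ s, PBase y => s + `|x - y|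
  | PHair _ x i s, PHair _ x' j s' =>
      if x == x' then (if i == j then `|s - s'| else s + s')
      else s + `|x - x'| + s'
  end.

Definition Pbase : set (ppoint R V) :=
  [set p | Pcarrier p /\ exists x, p = PBase x].
Definition Phair : set (ppoint R V) :=
  [set p | Pcarrier p /\ exists n x i s, p = PHair n x i s].
Definition Proots : set (ppoint R V) :=
  [set p | Pcarrier p /\ exists n x, (0 < n)%N /\ Tset n x /\ p = PBase x].
Definition PT (n : nat) : set (ppoint R V) :=
  [set p | Pcarrier p /\ exists x, Tset n x /\ p = PBase x].

End PX.

Definition metric_continuous {R : realType} {A B : Type}
  (S : set A) (d : A -> A -> R) (d' : B -> B -> R) (f : A -> B) : Prop :=
  forall p, S p -> forall eps : R, 0 < eps -> exists2 delta : R, 0 < delta &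
    forall q, S q -> d p q < delta -> d' (f p) (f q) < eps.

Definition homeomorphism {R : realType} {A B : Type}
  (S : set A) (d : A -> A -> R) (S' : set B) (d' : B -> B -> R) (f : A -> B) : Prop :=
  (forall p, S p -> S' (f p)) /\
  exists g : B -> A,
    [/\ forall q, S' q -> S (g q),
        forall p, S p -> g (f p) = p,
        forall q, S' q -> f (g q) = q,
        metric_continuous S d d' f
      & metric_continuous S' d' d g].

(* Main.v *)
Require Import Defs.
From HB Require Import structures.
From mathcomp Require Import all_boot all_order all_algebra.
From mathcomp Require Import all_classical all_reals all_analysis.
From mathcomp Require Import lra ring.
Set Implicit Arguments. Unset Strict Implicit. Unset Printing Implicit Defensive.
Import Order.TTheory GRing.Theory Num.Theory.
Import numFieldNormedType.Exports.
Local Open Scope classical_set_scope.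
Local Open Scope ring_scope.
Local Close Scope term_scope.

Section Alg.
Variables (R : realType) (V : normedModType R).
Variables (e : nat -> V) (N : set nat).

Definition fcoef (I : finType) (sg : I -> nat) (lam : I -> R) (k : nat) : R :=
  \sum_(i | sg i == k) lam i.

Lemma fin_psum (I : finType) (sg : I -> nat) (lam : I -> R) K :
  (forall i, (sg i < K)%N) ->
  \sum_(0 <= k < K) fcoef sg lam k *: e k = \sum_i lam i *: e (sg i).
Proof.
move=> HK; rewrite /fcoef.
under eq_bigr do rewrite scaler_suml.
rewrite big_nat (exchange_big_dep xpredT) //=.
apply: eq_bigr => i _.
rewrite big_mkcond /= (bigD1_seq (sg i)) ?iota_uniq ?mem_iota ?HK //=.
rewrite eqxx /= big1 ?addr0 // => k /negbTE nk.
rewrite eq_sym nk andbF //.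
by rewrite add0n subn0.
Qed.

Lemma fin_expansion (I : finType) (sg : I -> nat) (lam : I -> R) :
  (forall i, N (sg i)) ->
  expansion e N (fcoef sg lam) (\sum_i lam i *: e (sg i)).
Proof.
move=> HN; split.
  move=> k Nk; rewrite /fcoef big1 // => i /eqP ik.
  by exfalso; apply: Nk; rewrite -ik.
apply: cvg_near_cst; exists (\max_i (sg i).+1)%N => // K /= HK.
apply: fin_psum => i; apply: leq_trans HK.
by apply: (leq_bigmax_cond (F := fun i => (sg i).+1)).
Qed.

Lemma fcoef_inj (I : finType) (sg : I -> nat) (lam : I -> R) j :
  injective sg -> fcoef sg lam (sg j) = lam j.
Proof.
move=> isg; rewrite /fcoef (big_pred1 j) // => i /=.
by apply/eqP/eqP => [/isg|->].
Qed.

Lemma fcoef_out (I : finType) (sg : I -> nat) (lam : I -> R) k :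
  (forall i, sg i <> k) -> fcoef sg lam k = 0.
Proof. by move=> H; rewrite /fcoef big1 // => i /eqP /H. Qed.

Lemma fin_span (I : finType) (sg : I -> nat) (lam : I -> R) :
  (forall i, N (sg i)) -> injective sg ->
  closed_span e N (\sum_i lam i *: e (sg i)).
Proof.
move=> HN isg; apply: subset_closure.
exists (map sg (enum I)), (fcoef sg lam); split.
  by move=> n /mapP [i _ ->].
rewrite big_map big_enum /=; apply: eq_bigr => i _.
by rewrite fcoef_inj.
Qed.

Lemma exp_uniq a b x : basic_seq e N -> closed_span e N x ->
  expansion e N a x -> expansion e N b x -> a = b.
Proof.
move=> [_ H] cx ea eb; have [a0 [_ Hu]] := H x cx.
by rewrite -(Hu a ea) -(Hu b eb).
Qed.


Lemma map_enum_nth (l : seq rat) (F : rat -> R) :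
  [seq F (nth 0 l (nat_of_ord i)) | i <- enum 'I_(size l)] = map F l.
Proof.
by rewrite -[in RHS](mkseq_nth 0 l) /mkseq -val_enum_ord -!map_comp.
Qed.

Lemma type_uniq l l' x : basic_seq e N -> is_type l -> is_type l' ->
  has_type e N l x -> has_type e N l' x -> l = l'.
Proof.
move=> be [_ [sl pl]] [_ [sl' pl']] [sg [isg [Nsg ->]]] [sg' [isg' [Nsg' ex]]].
set lam := fun i : 'I_(size l) => (ratr (nth 0 l i) : R).
set lam' := fun i : 'I_(size l') => (ratr (nth 0 l' i) : R).
have ea := fin_expansion lam Nsg.
have ea' := fin_expansion lam' Nsg'; rewrite -ex in ea'.
have aa := exp_uniq be (fin_span (lam:=lam) Nsg isg) ea ea'.
have mem1 : forall k, (k \in map sg (enum 'I_(size l))) = (fcoef sg lam k != 0).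
  move=> k; apply/mapP/idP => [[i _ ->]|].
    rewrite fcoef_inj // /lam lt0r_neq0 // ltr0q.
    by apply/(all_nthP 0 pl).
  case: (pselect (exists i, sg i = k)) => [[i <-]|ni]; first by exists i; rewrite ?mem_enum.
  by rewrite fcoef_out ?eqxx // => i ik; apply: ni; exists i.
have mem2 : forall k, (k \in map sg' (enum 'I_(size l'))) = (fcoef sg' lam' k != 0).
  move=> k; apply/mapP/idP => [[i _ ->]|].
    rewrite fcoef_inj // /lam' lt0r_neq0 // ltr0q.
    by apply/(all_nthP 0 pl').
  case: (pselect (exists i, sg' i = k)) => [[i <-]|ni]; first by exists i; rewrite ?mem_enum.
  by rewrite fcoef_out ?eqxx // => i ik; apply: ni; exists i.
have pe : perm_eq (map sg (enum 'I_(size l))) (map sg' (enum 'I_(size l'))).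
  apply: uniq_perm; rewrite ?(map_inj_uniq isg) ?(map_inj_uniq isg') ?enum_uniq //.
  by move=> k; rewrite mem1 mem2 aa.
have pe2 := perm_map (fcoef sg lam) pe.
have e1 : map (fcoef sg lam) (map sg (enum 'I_(size l))) = map (ratr : rat -> R) l.
  rewrite -map_comp -map_enum_nth; apply: eq_map => i /=; exact: fcoef_inj.
have e2 : map (fcoef sg' lam') (map sg' (enum 'I_(size l'))) = map (ratr : rat -> R) l'.
  rewrite -map_comp -map_enum_nth; apply: eq_map => i /=; exact: fcoef_inj.
rewrite {2}aa e1 e2 in pe2.
apply: le_sorted_eq => //; exact: (perm_map_inj (@fmorph_inj _ R ratr)).
Qed.

End Alg.

Lemma Tset_uniq (R : realType) (V : normedModType R) t (e : nat -> V) N n m x :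
  type_enum t -> basic_seq e N -> (0 < n)%N -> (0 < m)%N ->
  Tset t e N n x -> Tset t e N m x -> n = m.
Proof.
move=> [ty uniqt _] be n0 m0 [_ hn] [_ hm].
have tt := type_uniq be (ty _ n0) (ty _ m0) hn hm.
have [k [_ Hk]] := uniqt _ (ty _ n0).
by rewrite -(Hk n (conj n0 erefl)) -(Hk m (conj m0 (esym tt))).
Qed.

Section Gen.
Variable R : realType.

Definition clamp (a b t : R) := if t <= a then a else if t <= b then t else b.

Lemma clampL a b t t' : a <= b -> `|clamp a b t - clamp a b t'| <= `|t - t'|.
Proof.
move=> ab; rewrite /clamp.
have [h|h] := leP 0 (t - t'); [rewrite (ger0_norm h)|rewrite (ltr0_norm h)];
rewrite ler_norml; repeat case: ifP => /= ?; apply/andP; split; lra.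
Qed.

Lemma clamp_id a b t : a <= t <= b -> clamp a b t = t.
Proof.
rewrite /clamp => /andP [h1 h2]; case: ifP => // h3.
by apply/eqP; rewrite eq_le h3 h1.
by rewrite h2.
Qed.

Lemma clamp_in a b t : a <= b -> a <= clamp a b t <= b.
Proof. by move=> ab; rewrite /clamp; repeat case: ifP => /= ?; apply/andP; split; lra. Qed.

Lemma ivt_ab (f : R -> R) a b v : a <= b ->
  (forall t, a <= t <= b -> forall eps, 0 < eps -> exists2 del, 0 < del &
     forall t', a <= t' <= b -> `|t - t'| < del -> `|f t - f t'| < eps) ->
  Num.min (f a) (f b) <= v <= Num.max (f a) (f b) ->
  exists2 c, a <= c <= b & f c = v.
Proof.
move=> ab H hv.
set F := fun t => f (clamp a b t).
have cF : continuous F.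
  move=> t; apply/cvgrPdist_lt => eps eps0.
  have [del del0 Hd] := H _ (clamp_in t ab) eps eps0.
  exists del => //= y /= ty; apply: Hd; first exact: clamp_in.
  exact: le_lt_trans (clampL _ _ ab) ty.
have Fa : F a = f a by rewrite /F clamp_id // lexx ab.
have Fb : F b = f b by rewrite /F clamp_id // lexx ab.
rewrite -Fa -Fb in hv.
have [c + Fc] := IVT ab (continuous_subspaceT cF) hv.
rewrite in_itv /= => cab; exists c => //.
by rewrite -Fc /F clamp_id.
Qed.


Section Paths.
Variables (A : Type) (S : set A) (d : A -> A -> R).

Definition ppath (g : R -> A) : Prop :=
  (forall t, 0 <= t <= 1 -> S (g t)) /\
  (forall t, 0 <= t <= 1 -> forall eps, 0 < eps -> exists2 del, 0 < del &
     forall t', 0 <= t' <= 1 -> `|t - t'| < del -> d (g t) (g t') < eps).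

Definition triod_in (B : set A) : Prop :=
  exists c g1 g2 g3, [/\ ppath g1, ppath g2 & ppath g3] /\ [/\
   g1 0 = c /\ g2 0 = c /\ g3 0 = c,
   g1 1 <> c /\ g2 1 <> c /\ g3 1 <> c,
   (forall t, 0 <= t <= 1 -> B (g1 t) /\ B (g2 t) /\ B (g3 t)) &
   (forall t t', 0 <= t <= 1 -> 0 <= t' <= 1 ->
      (g1 t = g2 t' -> g1 t = c) /\ (g1 t = g3 t' -> g1 t = c) /\
      (g2 t = g3 t' -> g2 t = c))].

Variables (phi : A -> R) (B : set A).
Hypothesis phiL : forall p q, B p -> B q -> `|phi p - phi q| <= d p q.
Hypothesis phiI : forall p q, B p -> B q -> phi p = phi q -> p = q.

Lemma phi_ivt g v : ppath g -> (forall t, 0 <= t <= 1 -> B (g t)) ->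
  Num.min (phi (g 0)) (phi (g 1)) <= v <= Num.max (phi (g 0)) (phi (g 1)) ->
  exists2 c, 0 <= c <= 1 & phi (g c) = v.
Proof.
move=> [_ gc] gB hv.
have [||c c01 hc] := @ivt_ab (phi \o g) 0 1 v ler01; last by exists c.
  2: exact: hv.
move=> t t01 eps eps0.
have [del del0 Hd] := gc t t01 eps eps0.
exists del => // t' t'01 tt'; apply: le_lt_trans (Hd t' t'01 tt').
exact: phiL (gB _ t01) (gB _ t'01).
Qed.

End Paths.

Section Arms.
Variables (A : Type) (S : set A) (d : A -> A -> R).

Lemma two_arms (phi : A -> R) (B : set A) g1 g2 c :
  (forall p q, B p -> B q -> `|phi p - phi q| <= d p q) ->
  (forall p q, B p -> B q -> phi p = phi q -> p = q) ->
  ppath S d g1 -> ppath S d g2 ->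
  (forall t, 0 <= t <= 1 -> B (g1 t) /\ B (g2 t)) ->
  g1 0 = c -> g2 0 = c ->
  (0 < (phi (g1 1) - phi c) * (phi (g2 1) - phi c)) ->
  exists t t', [/\ 0 <= t <= 1, 0 <= t' <= 1, g1 t = g2 t' & g1 t <> c].
Proof.
move=> phiL phiI p1 p2 gB g10 g20 hpos.
wlog hp : phi phiL phiI hpos / 0 < phi (g1 1) - phi c.
  move=> Hw; have [h|h] := ltrP 0 (phi (g1 1) - phi c); first exact: (Hw phi).
  apply: (Hw (fun x => - phi x)).
  - by move=> p q Bp Bq; rewrite -opprD normrN; exact: phiL.
  - by move=> p q Bp Bq /oppr_inj; exact: phiI.
  - have e1 : forall a b : R, - a - - b = - (a - b).
      by move=> a b; rewrite opprK opprB addrC.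
    by rewrite !e1 mulrNN.
  - have : phi (g1 1) - phi c != 0.
      by apply/negP => /eqP h0; rewrite h0 mul0r ltxx in hpos.
    move=> h0; rewrite -opprD oppr_gt0 lt_neqAle h0 h //.
have hp2 : 0 < phi (g2 1) - phi c.
  by move: hpos; rewrite pmulr_rgt0.
set m := phi c + Num.min (phi (g1 1) - phi c) (phi (g2 1) - phi c) / 2.
have B1 : forall t, 0 <= t <= 1 -> B (g1 t) by move=> t /gB [].
have B2 : forall t, 0 <= t <= 1 -> B (g2 t) by move=> t /gB [].
have lo : phi c < m.
  by rewrite /m ltrDl divr_gt0 // lt_min hp hp2.
have hi1 : m <= phi (g1 1).
  have h1 : Num.min (phi (g1 1) - phi c) (phi (g2 1) - phi c) <= phi (g1 1) - phi c.
    by rewrite ge_min lexx.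
  rewrite /m; lra.
have hi2 : m <= phi (g2 1).
  have h1 : Num.min (phi (g1 1) - phi c) (phi (g2 1) - phi c) <= phi (g2 1) - phi c.
    by rewrite ge_min lexx orbT.
  rewrite /m; lra.
have [t t01 ht] : exists2 t, 0 <= t <= 1 & phi (g1 t) = m.
  apply: (phi_ivt phiL p1 B1).
  rewrite g10; apply/andP; split.
  - by rewrite ge_min (ltW lo).
  - by rewrite le_max hi1 orbT.
have [t' t'01 ht'] : exists2 t, 0 <= t <= 1 & phi (g2 t) = m.
  apply: (phi_ivt phiL p2 B2).
  rewrite g20; apply/andP; split.
  - by rewrite ge_min (ltW lo).
  - by rewrite le_max hi2 orbT.
exists t, t'; split => //.
  by apply: phiI (B1 _ t01) (B2 _ t'01) _; rewrite ht ht'.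
by move=> h; rewrite h in ht; rewrite ht ltxx in lo.
Qed.

Lemma no_triod (phi : A -> R) (B : set A) :
  (forall p q, B p -> B q -> `|phi p - phi q| <= d p q) ->
  (forall p q, B p -> B q -> phi p = phi q -> p = q) ->
  ~ triod_in S d B.
Proof.
move=> phiL phiI [c [g1 [g2 [g3 [[p1 p2 p3] [[g10 [g20 g30]] [g11 [g21 g31]] gB dj]]]]]].
have cB : B c by rewrite -g10; have [] := gB 0 (_ : 0 <= 0 <= 1); rewrite ?lexx ?ler01.
have nz : forall g, ppath S d g -> (forall t, 0 <= t <= 1 -> B (g t)) -> g 1 <> c ->
    phi (g 1) - phi c != 0.
  move=> g _ Bg g1c; rewrite subr_eq0; apply/negP => /eqP h.
  by apply: g1c; apply: phiI h => //; apply: Bg; rewrite ler01 lexx.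
have B1 : forall t, 0 <= t <= 1 -> B (g1 t) by move=> t /gB [].
have B2 : forall t, 0 <= t <= 1 -> B (g2 t) by move=> t /gB [] _ [].
have B3 : forall t, 0 <= t <= 1 -> B (g3 t) by move=> t /gB [] _ [].
have n1 := nz _ p1 B1 g11; have n2 := nz _ p2 B2 g21; have n3 := nz _ p3 B3 g31.
set x1 := phi (g1 1) - phi c in n1; set x2 := phi (g2 1) - phi c in n2;
set x3 := phi (g3 1) - phi c in n3.
have : 0 < x1 * x2 \/ 0 < x1 * x3 \/ 0 < x2 * x3.
  move: n1 n2 n3; rewrite !neq_lt => /orP[h1|h1] /orP[h2|h2] /orP[h3|h3];
  first [left; nra | right; left; nra | right; right; nra].
case=> [h|[h|h]].
- have [t [t' [t01 t'01 e12 nc]]] := two_arms phiL phiI p1 p2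
     (fun t h => conj (B1 t h) (B2 t h)) g10 g20 h.
  by apply: nc; have [+ _] := dj t t' t01 t'01; apply.
- have [t [t' [t01 t'01 e12 nc]]] := two_arms phiL phiI p1 p3
     (fun t h => conj (B1 t h) (B3 t h)) g10 g30 h.
  by apply: nc; have [_ [+ _]] := dj t t' t01 t'01; apply.
- have [t [t' [t01 t'01 e12 nc]]] := two_arms phiL phiI p2 p3
     (fun t h => conj (B2 t h) (B3 t h)) g20 g30 h.
  by apply: nc; have [_ [_ +]] := dj t t' t01 t'01; apply.
Qed.

End Arms.
End Gen.

Lemma in01_0 (R : realType) : 0 <= (0:R) <= 1.
Proof. by rewrite lexx ler01. Qed.
Lemma in01_1 (R : realType) : 0 <= (1:R) <= 1.
Proof. by rewrite lexx ler01. Qed.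

Section Transfer.
Variables (R : realType) (A A' : Type) (S : set A) (d : A -> A -> R)
  (S' : set A') (d' : A' -> A' -> R) (T : A -> A').
Hypothesis TS : forall q, S q -> S' (T q).
Hypothesis Tinj : forall q q', S q -> S q' -> T q = T q' -> q = q'.
Hypothesis Tc : metric_continuous S d d' T.

Lemma ppath_comp g : ppath S d g -> ppath S' d' (T \o g).
Proof.
move=> [gS gc]; split => [t t01|t t01 eps eps0]; first exact/TS/gS.
have [del1 del10 H1] := Tc (gS _ t01) eps0.
have [del del0 H] := gc t t01 del1 del10.
exists del => // t' t'01 tt'; apply: H1; first exact: gS.
exact: H.
Qed.

Definition pball (A0 : Type) (S0 : set A0) (d0 : A0 -> A0 -> R) p r :=
  [set q | S0 q /\ d0 p q < r].

Lemma triod_transfer p r : S p -> 0 < r ->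
  (forall del, 0 < del -> triod_in S d (pball S d p del)) ->
  triod_in S' d' (pball S' d' (T p) r).
Proof.
move=> Sp r0 H.
have [del del0 Hd] := Tc Sp r0.
have [c [g1 [g2 [g3 [[p1 p2 p3] [[g10 [g20 g30]] [g11 [g21 g31]] gB dj]]]]]] := H del del0.
have Sg : forall g, ppath S d g -> forall t, 0 <= t <= 1 -> S (g t) by move=> g [].
have S0 := in01_0 R.
have S1 := in01_1 R.
have Sc : S c by rewrite -g10; exact: Sg p1 _ S0.
exists (T c), (T \o g1), (T \o g2), (T \o g3); split.
  by split; apply: ppath_comp.
split.
- by rewrite /= g10 g20 g30.
- split; [move=> /Tinj h; apply: g11; apply: h (Sg _ p1 _ S1) Sc
        |split; move=> /Tinj h; [apply: g21; apply: h (Sg _ p2 _ S1) Sc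
                                |apply: g31; apply: h (Sg _ p3 _ S1) Sc]].
- move=> t t01; have [[_ b1] [[_ b2] [_ b3]]] := gB t t01.
  have s1 := Sg _ p1 _ t01; have s2 := Sg _ p2 _ t01; have s3 := Sg _ p3 _ t01.
  split; [|split]; split; by [apply: TS| apply: Hd].
- move=> t t' t01 t'01; have [h12 [h13 h23]] := dj t t' t01 t'01.
  split; [|split] => /= /Tinj h.
  + by rewrite h12 // h //; [exact: (Sg _ p1)|exact: (Sg _ p2)].
  + by rewrite h13 // h //; [exact: (Sg _ p1)|exact: (Sg _ p3)].
  + by rewrite h23 // h //; [exact: (Sg _ p2)|exact: (Sg _ p3)].
Qed.

End Transfer.

Lemma loc_const_ab (R : realType) (chi : R -> bool) (a b : R) : a <= b ->
  (forall u, a <= u <= b -> exists2 del, 0 < del &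
     forall u', a <= u' <= b -> `|u - u'| < del -> chi u' = chi u) ->
  chi a = chi b.
Proof.
move=> ab H.
set f := fun u => if chi u then (1:R) else 0.
have fc : forall u, a <= u <= b -> forall eps, 0 < eps -> exists2 del, 0 < del &
     forall u', a <= u' <= b -> `|u - u'| < del -> `|f u - f u'| < eps.
  move=> u hu eps eps0; have [del del0 Hd] := H u hu.
  by exists del => // u' hu' h; rewrite /f (Hd u' hu' h) subrr normr0.
case: (boolP (chi a == chi b)) => [/eqP //|nab].
have hv : Num.min (f a) (f b) <= 2^-1 <= Num.max (f a) (f b).
  rewrite /f; move: nab; case: (chi a); case: (chi b) => //= _;
  rewrite ?ge_min ?le_max; apply/andP; split; apply/orP; lra.
have [c _ fcv] := ivt_ab ab fc hv.
by move: fcv; rewrite /f; case: (chi c) => h; lra.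
Qed.

Lemma bw01 (R : realType) (u : nat -> R) : (forall n, 0 < u n <= 1) ->
  exists (f : nat -> nat) (l : R), (forall J, (f J < f J.+1)%N) /\ 0 <= l <= 1 /\
    forall eps, 0 < eps -> exists J, forall j, (J <= j)%N -> `|l - u (f j)| < eps.
Proof.
move=> hu.
have bu : bounded_fun u.
  exists 1; split => // M M1 x _; have /andP [h1 h2] := hu x.
  by rewrite /= ger0_norm ?(ltW h1) // (le_trans h2) // ltW.
have [f fi cf] := bolzano_weierstrass bu.
exists f, (lim ((u \o f) @ \oo)); split.
  move=> J; rewrite ltnNge; apply/negP => h.
  by have := fi J.+1 J; rewrite leEnat h ltnn.
split.
  apply/andP; split.
    apply: limr_ge => //; apply: nearW => n /=; have /andP [h _] := hu (f n); exact: ltW.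
  apply: limr_le => //; apply: nearW => n /=; by have /andP [_ h] := hu (f n).
move=> eps eps0; have := (cvgrPdist_lt _ _).1 cf eps eps0.
by move=> [J _ HJ]; exists J => j Jj; exact: HJ.
Qed.

Section Span.
Variables (R : realType) (V : normedModType R) (e : nat -> V) (N : set nat).
Hypothesis be : basic_seq e N.

Lemma lim_uniqV (u : nat -> V) (x y : V) :
  u @ \oo --> x -> u @ \oo --> y -> x = y.
Proof. by move=> h1 h2; exact: (@cvg_unique _ (@norm_hausdorff R V) (u @ \oo) _ x y h1 h2). Qed.

Lemma exp_span a z : expansion e N a z -> closed_span e N z.
Proof.
move=> [a0 cv]; apply: (closed_cvg _ (@closed_closure _ _) _ _ cv).
apply: nearW => K; apply: subset_closure.
exists [seq n <- iota 0 K | `[< N n >]], a; split.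
  by move=> n; rewrite mem_filter => /andP [/asboolP h _].
rewrite big_filter [in RHS]big_mkcond /index_iota subn0; apply: eq_bigr => n _.
by case: asboolP => // nN; rewrite a0 // scale0r.
Qed.

Lemma span_exp z : closed_span e N z -> exists a, expansion e N a z.
Proof. by move=> cz; have [a [ea _]] := be.2 z cz; exists a. Qed.

Lemma const_psum a z w K0 : expansion e N a z ->
  (forall K, (K0 <= K)%N -> \sum_(0 <= n < K) a n *: e n = w) -> z = w.
Proof.
move=> [_ cv] H; apply: lim_uniqV cv _.
by apply: cvg_near_cst; exists K0 => // K /= /H.
Qed.

Lemma psum_single (a : nat -> R) k K : (forall n, n != k -> a n = 0) ->
  (k < K)%N -> \sum_(0 <= n < K) a n *: e n = a k *: e k.
Proof.
move=> ak kK; rewrite (bigD1_seq k) ?iota_uniq ?mem_iota //=; last first.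
  by rewrite add0n subn0.
rewrite big1 ?addr0 // => n nk.
by rewrite ak // scale0r.
Qed.

Lemma dim0_zero z : (forall k, ~ N k) -> closed_span e N z -> z = 0.
Proof.
move=> n0 /span_exp [a ea]; apply: (const_psum (K0:=0%N) ea) => K _.
by rewrite big1 // => n _; rewrite ea.1 // scale0r.
Qed.

Lemma dim1_line z k : N k -> (forall j, N j -> j = k) -> closed_span e N z ->
  exists c, z = c *: e k.
Proof.
move=> Nk uk /span_exp [a ea]; exists (a k); apply: (const_psum (K0:=k.+1) ea) => K kK.
apply: psum_single => // n nk; apply: ea.1 => Nn.
by move: nk; rewrite (uk _ Nn) eqxx.
Qed.

Lemma span0 : closed_span e N 0.
Proof. by apply: subset_closure; exists [::], (fun=> 0); split => //; rewrite big_nil. Qed.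

Lemma shift_span y k c : closed_span e N y -> N k -> closed_span e N (y + c *: e k).
Proof.
move=> /span_exp [a [a0 cv]] Nk.
apply: (@exp_span (fun n => a n + (if n == k then c else 0))); split.
  move=> n Nn; rewrite a0 // add0r; case: eqP => // nk.
  by exfalso; apply: Nn; rewrite nk.
have -> : (fun K => \sum_(0 <= n < K) (a n + (if n == k then c else 0)) *: e n) =
  (fun K => \sum_(0 <= n < K) a n *: e n +
            \sum_(0 <= n < K) (if n == k then c else 0) *: e n).
  by apply: funext => K; rewrite -big_split; apply: eq_bigr => n _; rewrite scalerDl.
apply: cvgD => //; apply: cvg_near_cst; exists k.+1 => // K /= kK.
by rewrite (@psum_single (fun n => if n == k then c else 0) k) ?eqxx // => n /negbTE ->.
Qed.

Lemma mult_span k c : N k -> closed_span e N (c *: e k).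
Proof. by move=> Nk; rewrite -[_ *: _]add0r; apply: shift_span => //; exact: span0. Qed.

Lemma e_neq0 k : N k -> e k != 0.
Proof. by move=> Nk; exact: be.1. Qed.

Lemma indep2 a b al bt : N a -> N b -> a != b ->
  al *: e a + bt *: e b = 0 -> al = 0 /\ bt = 0.
Proof.
move=> Na Nb ab h.
set sg := fun i : bool => if i then a else b.
set lam := fun i : bool => if i then al else bt.
have isg : injective sg.
  by case; case => //= /eqP; rewrite ?(negbTE ab) // eq_sym (negbTE ab).
have Nsg : forall i, N (sg i) by case.
have ex := fin_expansion e lam Nsg.
have hs : \sum_i lam i *: e (sg i) = 0 by rewrite big_bool /= h.
rewrite hs in ex.
have ez : expansion e N (fun=> 0) 0.
  split => //; apply: cvg_near_cst; apply: nearW => K.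
  by rewrite big1 // => n _; rewrite scale0r.
have := exp_uniq be span0 ex ez => hf.
have := congr1 (fun f => f a) hf; have := congr1 (fun f => f b) hf => /=.
rewrite -[a]/(sg true) -[b]/(sg false) !fcoef_inj //.
Qed.

End Span.

Lemma N_cases (N : set nat) :
  (exists a b, [/\ N a, N b & a != b]) \/ (exists k, N k /\ forall j, N j -> j = k)
  \/ (forall k, ~ N k).
Proof.
case: (pselect (exists k, N k)) => [[k Nk]|nk]; last first.
  by right; right => k Nk; apply: nk; exists k.
case: (pselect (exists j, N j /\ j != k)) => [[j [Nj jk]]|nj].
  by left; exists j, k.
right; left; exists k; split => // j Nj; apply/eqP.
by apply: contrapT => /negP h; apply: nj; exists j.
Qed.

Section PX2.
Variables (R : realType) (V : normedModType R) (t : nat -> seq rat)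
  (e : nat -> V) (N : set nat).
Hypotheses (te : type_enum t) (be : basic_seq e N) (ne : normalised e N).
Local Notation C := (Pcarrier t e N).
Local Notation d := (@Pdist R V).

Lemma dim1_type l x k : N k -> (forall j, N j -> j = k) -> is_type l ->
  has_type e N l x -> exists q : R, 0 < q /\ x = q *: e k.
Proof.
move=> Nk uk [ln0 [_ pl]] [sg [isg [Nsg ->]]].
exists (\sum_(i < size l) (ratr (nth 0 l i) : R)); split; last first.
  by rewrite scaler_suml; apply: eq_bigr => i _; rewrite (uk _ (Nsg i)).
have sz : (0 < size l)%N by rewrite lt0n size_eq0.
rewrite (bigD1 (Ordinal sz)) //=.
have h0 : (0 : R) < ratr (nth 0 l 0) by rewrite ltr0q; exact/(all_nthP 0 pl).
apply: (lt_le_trans h0); rewrite lerDl; apply: sumr_ge0 => i _.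
by rewrite ler0q; apply/ltW/(all_nthP 0 pl).
Qed.

Lemma dim0_notype l x : (forall k, ~ N k) -> is_type l -> ~ has_type e N l x.
Proof.
move=> n0 [ln0 _] [sg [_ [Nsg _]]].
have sz : (0 < size l)%N by rewrite lt0n size_eq0.
exact: (n0 _ (Nsg (Ordinal sz))).
Qed.

Lemma hair_ball n x i s q : C (PHair n x i s) -> C q ->
  d (PHair n x i s) q < s -> exists s', q = PHair n x i s' /\ 0 < s' <= 1.
Proof.
move=> /= [n0 Tn _ /andP [s0 _]]; case: q => [z|m x' j s'] /=.
  by move=> _ h; have := normr_ge0 (x - z); lra.
move=> [m0 Tm _ /andP [s'0 s'1]].
case: eqP => [exx|nx]; last by move=> h; have := normr_ge0 (x - x'); lra.
subst x'; case: eqP => [eij|nij]; last by lra.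
subst j.
move=> _; exists s'; split; last by rewrite s'0 s'1.
by rewrite (Tset_uniq te be m0 n0 Tm Tn).
Qed.

Definition scoord (p : ppoint R V) : R :=
  match p with PHair _ _ _ s => s | PBase _ => 0 end.

Lemma hair_no_triod n x i s : C (PHair n x i s) ->
  ~ triod_in C d (pball C d (PHair n x i s) s).
Proof.
move=> Cp; apply: (@no_triod _ _ C d scoord).
  move=> p q [Cp' hp] [Cq hq].
  have [s1 [-> _]] := hair_ball Cp Cp' hp.
  have [s2 [-> _]] := hair_ball Cp Cq hq.
  by rewrite /= !eqxx.
move=> p q [Cp' hp] [Cq hq].
have [s1 [-> _]] := hair_ball Cp Cp' hp.
by have [s2 [-> _]] := hair_ball Cp Cq hq => /= ->.
Qed.

End PX2.

Section Triods.
Variables (R : realType) (V : normedModType R) (t : nat -> seq rat)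
  (e : nat -> V) (N : set nat).
Hypotheses (te : type_enum t) (be : basic_seq e N) (ne : normalised e N).
Local Notation C := (Pcarrier t e N).
Local Notation d := (@Pdist R V).

Lemma lip_path (g : R -> ppoint R V) K : 0 <= K ->
  (forall u, 0 <= u <= 1 -> C (g u)) ->
  (forall u u', 0 <= u <= 1 -> 0 <= u' <= 1 -> d (g u) (g u') <= K * `|u - u'|) ->
  ppath C d g.
Proof.
move=> K0 gC gL; split => // u hu eps eps0.
have K1 : 0 < K + 1 by lra.
exists (eps / (K + 1)); first by rewrite divr_gt0.
move=> u' hu' h; apply: le_lt_trans (gL _ _ hu hu') _.
rewrite ltr_pdivlMr // in h; have := normr_ge0 (u - u'); nra.
Qed.

Lemma arm_path y k c : closed_span e N y -> N k ->
  ppath C d (fun u => PBase (y + (u * c) *: e k)).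
Proof.
move=> cy Nk; apply: (@lip_path _ `|c|) => //.
  by move=> u _ /=; apply: shift_span.
move=> u u' _ _ /=.
rewrite opprD addrACA subrr add0r -scalerBl normrZ (ne Nk) mulr1 -mulrBl normrM mulrC.
by [].
Qed.

Lemma arm_dist y k c u : N k ->
  d (PBase y) (PBase (y + (u * c) *: e k)) = `|u * c|.
Proof. by move=> Nk /=; rewrite opprD addrA subrr add0r normrN normrZ (ne Nk) mulr1. Qed.

Lemma arm_eq y k c k' c' u u' :
  PBase (y + (u * c) *: e k) = PBase (y + (u' * c') *: e k') :> ppoint R V ->
  (u * c) *: e k = (u' * c') *: e k'.
Proof. by move=> [] /addrI. Qed.

Lemma arm0 y k c : PBase (y + ((0:R) * c) *: e k) = PBase y :> ppoint R V.
Proof. by rewrite mul0r scale0r addr0. Qed.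


Lemma arm_ne y k c : N k -> c != 0 ->
  PBase (y + ((1:R) * c) *: e k) <> PBase y :> ppoint R V.
Proof.
move=> Nk c0 [] h.
have : ((1:R) * c) *: e k = 0 by apply: (addrI y); rewrite addr0.
by move/eqP; rewrite scaler_eq0 mul1r (negbTE c0) (negbTE (e_neq0 be Nk)).
Qed.

Lemma small_norm (u c : R) : 0 <= u <= 1 -> `|u * c| <= `|c|.
Proof.
move=> /andP [u0 u1]; rewrite normrM (ger0_norm u0).
by apply: ler_piMl.
Qed.

Lemma X_triod2 a b y r : N a -> N b -> a != b -> closed_span e N y -> 0 < r ->
  triod_in C d (pball C d (PBase y) r).
Proof.
move=> Na Nb ab cy r0.
set rh := r / 2.
have rh0 : 0 < rh by rewrite divr_gt0.
have rhr : rh < r by rewrite /rh; lra.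
have rhn : rh != 0 by rewrite gt_eqF.
exists (PBase y), (fun u => PBase (y + (u * rh) *: e a)),
  (fun u => PBase (y + (u * (- rh)) *: e a)), (fun u => PBase (y + (u * rh) *: e b)).
split; first by split; apply: arm_path.
split.
- by rewrite !arm0.
- by split; [|split]; apply: arm_ne; rewrite ?oppr_eq0.
- move=> u hu; split; [|split]; (split; [apply/shift_span|]) => //;
    rewrite arm_dist //; apply: le_lt_trans (small_norm _ hu) _;
    by rewrite ?normrN gtr0_norm.
- move=> u u' hu hu'; move: (hu) (hu') => /andP [u0 u1] /andP [u'0 u'1].
  split; [|split] => /arm_eq h.
  + have : (u * rh - u' * (- rh)) *: e a = 0 by rewrite scalerBl h subrr.
    move/eqP; rewrite scaler_eq0 (negbTE (e_neq0 be Na)) orbF => /eqP h2.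
    have uz : u = 0.
      by apply/eqP; rewrite eq_le u0 andbT; nra.
    by rewrite uz arm0.
  + have : (u * rh) *: e a + (- (u' * rh)) *: e b = 0 by rewrite h scaleNr subrr.
    move/(indep2 be Na Nb ab) => [h2 _].
    have uz : u = 0 by move/eqP: h2; rewrite mulf_eq0 (negbTE rhn) orbF => /eqP.
    by rewrite uz arm0.
  + have : (u * - rh) *: e a + (- (u' * rh)) *: e b = 0 by rewrite h scaleNr subrr.
    move/(indep2 be Na Nb ab) => [h2 _].
    have uz : u = 0.
      by move/eqP: h2; rewrite mulf_eq0 oppr_eq0 (negbTE rhn) orbF => /eqP.
    by rewrite uz arm0.
Qed.


Lemma line_dist k a b : N k ->
  d (PBase (a *: e k)) (PBase (b *: e k)) = `|a - b|.
Proof. by move=> Nk /=; rewrite -scalerBl normrZ (ne Nk) mulr1. Qed.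

Lemma arm_same y k c c' u u' : N k ->
  PBase (y + (u * c) *: e k) = PBase (y + (u' * c') *: e k) :> ppoint R V ->
  u * c = u' * c'.
Proof.
move=> Nk /arm_eq h.
have : (u * c - u' * c') *: e k = 0 by rewrite scalerBl h subrr.
move/eqP; rewrite scaler_eq0 (negbTE (e_neq0 be Nk)) orbF subr_eq0.
by move/eqP.
Qed.

Lemma arm_zero y k c u : N k ->
  PBase (y + (u * c) *: e k) = PBase y :> ppoint R V -> u * c = 0.
Proof.
move=> Nk h; have := @arm_same y k c c u 0 Nk.
by rewrite arm0 mul0r; apply.
Qed.

Lemma X_triod1 k c0 r : N k -> (forall j, N j -> j = k) -> 0 <= c0 -> 0 < r ->
  triod_in C d (pball C d (PBase (c0 *: e k)) r).
Proof.
move=> Nk uk c00 r0.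
have [q] : exists q : rat, (ratr q : R) \in `]c0, c0 + r / 4[.
  by apply: rat_in_itvoo; rewrite ltrDl divr_gt0.
rewrite in_itv /= => /andP [q1 q2].
have q0 : (0 < q)%R by rewrite -(ltr0q R); lra.
have ist : is_type [:: q] by split => //; split => //=; rewrite q0.
have [ty uniqt _] := te.
have [n [[n0 tn] _]] := uniqt _ ist.
set r1 := (ratr q : R) *: e k.
have cr1 : closed_span e N r1 by apply: mult_span.
have Tr1 : Tset t e N n r1.
  split => //; rewrite tn; exists (fun _ => k); split.
    by move=> i j _; rewrite (ord1 i) (ord1 j).
  by split => //; rewrite big_ord1.
set rh := Num.min (r / 4) 1.
have rh0 : 0 < rh by rewrite lt_min divr_gt0 ?ltr01.
have rh1 : rh <= 1 by rewrite ge_min lexx orbT.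
have rhr : rh <= r / 4 by rewrite ge_min lexx.
have rhn : rh != 0 by rewrite gt_eqF.
have e1 : forall u : R, r1 + (u * rh) *: e k = (ratr q + u * rh) *: e k.
  by move=> u; rewrite scalerDl.
have e2 : forall u : R, r1 + (u * - rh) *: e k = (ratr q + u * - rh) *: e k.
  by move=> u; rewrite scalerDl.
exists (PBase r1), (fun u => PBase (r1 + (u * rh) *: e k)),
  (fun u => PBase (r1 + (u * (- rh)) *: e k)),
  (fun u => if u == 0 then PBase r1 else PHair n r1 0 (u * rh)).
split.
  split; [exact: arm_path|exact: arm_path|].
  apply: (@lip_path _ rh); first exact: ltW.
    move=> u /andP [u0 u1]; case: eqP => //= /eqP un0; split => //.
    have up : 0 < u by rewrite lt_neqAle eq_sym un0.
    by apply/andP; split; [rewrite mulr_gt0|nra].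
  move=> u u' /andP [u0 u1] /andP [u'0 u'1].
  case: eqP => [->|un0]; case: eqP => [->|u'n0] /=;
    rewrite ?subrr ?normr0 ?add0r ?mulr0 ?eqxx ?sub0r ?subr0 ?normrN //.
  - by rewrite (ger0_norm u'0) mulrC.
  - by rewrite addr0 (ger0_norm u0) mulrC.
  - by rewrite -mulrBl normrM (gtr0_norm rh0) mulrC.
split.
- by rewrite !arm0 eqxx.
- split; [|split].
  + by apply: arm_ne.
  + by apply: arm_ne => //; rewrite oppr_eq0.
  + by rewrite oner_eq0.
- move=> u /andP [u0 u1].
  have hp : 0 <= u * rh <= rh by apply/andP; split; nra.
  split; [|split]; split.
  + by apply: shift_span.
  + rewrite e1 line_dist // ltr_norml; apply/andP; split; lra.
  + by apply: shift_span.
  + rewrite e2 line_dist // ltr_norml; apply/andP; split; lra.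
  + case: eqP => //= /eqP un0; split => //.
    have up : 0 < u by rewrite lt_neqAle eq_sym un0.
    by apply/andP; split; [rewrite mulr_gt0|nra].
  + case: eqP => _; rewrite /= -scalerBl normrZ (ne Nk) mulr1 ?ltr_norml.
      by apply/andP; split; lra.
    have : `|c0 - ratr q| < r / 4 by rewrite ltr_norml; apply/andP; split; lra.
    lra.
- move=> u u' /andP [u0 u1] /andP [u'0 u'1].
  split; [|split].
  + move=> hh; have h := arm_same Nk hh.
    have uz : u = 0 by apply/eqP; rewrite eq_le u0 andbT; nra.
    by rewrite uz arm0.
  + case: eqP => [_ hh|_ hh]; last by discriminate hh.
    have h := arm_zero Nk hh.
    have uz : u = 0 by move/eqP: h; rewrite mulf_eq0 (negbTE rhn) orbF => /eqP.
    by rewrite uz arm0.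
  + case: eqP => [_ hh|_ hh]; last by discriminate hh.
    have h := arm_zero Nk hh.
    have uz : u = 0.
      by move/eqP: h; rewrite mulf_eq0 oppr_eq0 (negbTE rhn) orbF => /eqP.
    by rewrite uz arm0.
Qed.

End Triods.

Section Ray.
Variables (R : realType) (V : normedModType R) (t : nat -> seq rat)
  (e : nat -> V) (N : set nat).
Hypotheses (te : type_enum t) (be : basic_seq e N) (ne : normalised e N).
Local Notation C := (Pcarrier t e N).
Local Notation d := (@Pdist R V).

Lemma tn_type n : (0 < n)%N -> is_type (t n).
Proof. by move=> n0; case: te => h _ _; exact: h. Qed.

Lemma ray_ball k c q : N k -> (forall j, N j -> j = k) -> c < 0 ->
  C q -> d (PBase (c *: e k)) q < - c -> exists b, b < 0 /\ q = PBase (b *: e k).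
Proof.
move=> Nk uk c0; case: q => [z|m x i s] /=.
  move=> cz; have [b ->] := dim1_line be Nk uk cz.
  rewrite -scalerBl normrZ (ne Nk) mulr1 ltr_norml => /andP [h1 h2].
  by exists b; split => //; lra.
move=> [m0 [_ hx] _ /andP [s0 _]].
have [q [q0 ->]] := dim1_type Nk uk (tn_type m0) hx.
rewrite -scalerBl normrZ (ne Nk) mulr1 => h.
have : q - c <= `|c - q| by rewrite distrC ler_norm.
lra.
Qed.

Definition bnorm (p : ppoint R V) : R :=
  match p with PBase z => `|z| | PHair _ _ _ _ => 0 end.

Lemma ray_no_triod k c : N k -> (forall j, N j -> j = k) -> c < 0 ->
  ~ triod_in C d (pball C d (PBase (c *: e k)) (- c)).
Proof.
move=> Nk uk c0; apply: (@no_triod _ _ C d bnorm).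
  move=> p q [Cp hp] [Cq hq].
  have [b [_ ->]] := ray_ball Nk uk c0 Cp hp.
  have [b' [_ ->]] := ray_ball Nk uk c0 Cq hq.
  exact: ler_dist_dist.
move=> p q [Cp hp] [Cq hq].
have [b [b0 ->]] := ray_ball Nk uk c0 Cp hp.
have [b' [b'0 ->]] := ray_ball Nk uk c0 Cq hq.
rewrite /= !normrZ (ne Nk) !mulr1 (ltr0_norm b0) (ltr0_norm b'0) => /oppr_inj ->.
by [].
Qed.

Lemma root_triod n x r : (0 < n)%N -> Tset t e N n x -> 0 < r ->
  triod_in C d (pball C d (PBase x) r).
Proof.
move=> n0 [cx hx] r0; have [[a [b [Na Nb ab]]]|[[k [Nk uk]]|n0N]] := N_cases N.
- exact: X_triod2 Na Nb ab cx r0.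
- have [q [q0 ->]] := dim1_type Nk uk (tn_type n0) hx.
  apply: X_triod1 => //; exact: ltW.
- by exfalso; apply: (dim0_notype n0N (tn_type n0) hx).
Qed.
End Ray.

Section Legs.
Variables (R : realType) (V : normedModType R) (t : nat -> seq rat)
  (e : nat -> V) (N : set nat).
Hypotheses (te : type_enum t) (be : basic_seq e N) (ne : normalised e N).
Local Notation C := (Pcarrier t e N).
Local Notation d := (@Pdist R V).

Definition onleg (x0 : V) (i0 : nat) (p : ppoint R V) : bool :=
  match p with PHair _ x i _ => (x == x0) && (i == i0) | _ => false end.

Definition ishair (p : ppoint R V) : Prop := exists n x i s, p = PHair n x i s.

Lemma hair_loc g u n x i s : ppath C d g -> 0 <= u <= 1 -> g u = PHair n x i s ->
  exists2 del, 0 < del & forall u', 0 <= u' <= 1 -> `|u - u'| < del ->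
    exists s', g u' = PHair n x i s'.
Proof.
move=> [gC gc] hu gu.
have Cp : C (PHair n x i s) by rewrite -gu; exact: gC.
have s0 : 0 < s by case: Cp => _ _ _ /andP [].
have [del del0 H] := gc u hu s s0.
exists del => // u' hu' h.
have := H u' hu' h; rewrite gu => h2.
by have [s' [-> _]] := hair_ball te be Cp (gC _ hu') h2; exists s'.
Qed.

Lemma leg_const g a b x0 i0 : ppath C d g -> 0 <= a -> a <= b -> b <= 1 ->
  (forall u, a <= u <= b -> ishair (g u)) ->
  onleg x0 i0 (g a) = onleg x0 i0 (g b).
Proof.
move=> pg a0 ab b1 H.
apply: (@loc_const_ab _ (fun u => onleg x0 i0 (g u))) => // u /andP [au ub].
have hu : 0 <= u <= 1 by apply/andP; split; lra.
have [n [x [i [s gu]]]] := H u (introT andP (conj au ub)).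
have [del del0 Hd] := hair_loc pg hu gu.
exists del => // u' /andP [au' u'b] h.
have hu' : 0 <= u' <= 1 by apply/andP; split; lra.
by have [s' ->] := Hd u' hu' h; rewrite gu.
Qed.

Lemma leg_path n x i : (0 < n)%N -> Tset t e N n x -> (i < n)%N ->
  ppath C d (fun u => if u == 0 then PBase x else PHair n x i u).
Proof.
move=> n0 Tn iN; apply: (@lip_path _ _ _ _ _ _ 1) => //.
  move=> u /andP [u0 u1]; case: eqP => [_|/eqP un0] /=; first by case: Tn.
  by split => //; apply/andP; split => //; rewrite lt_neqAle eq_sym un0.
move=> u u' /andP [u0 u1] /andP [u'0 u'1].
case: eqP => [->|un0]; case: eqP => [->|u'n0] /=;
  rewrite ?subrr ?normr0 ?add0r ?mulr0 ?eqxx ?sub0r ?subr0 ?normrN ?mul1r ?addr0 //.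
- by rewrite ger0_norm.
- by rewrite ger0_norm.
Qed.

Lemma path_root z g m x i s : ppath C d g -> g 0 = PBase z ->
  (forall u, 0 < u <= 1 -> ishair (g u)) -> g 1 = PHair m x i s ->
  x = z /\ (forall u, 0 < u <= 1 -> onleg x i (g u)).
Proof.
move=> pg g0 H g1.
have legs : forall u, 0 < u <= 1 -> onleg x i (g u).
  move=> u /andP [u0 u1].
  rewrite (@leg_const g u 1 x i pg (ltW u0) u1 (lexx _)); first by rewrite g1 /= !eqxx.
  by move=> u' /andP [uu' u'1]; apply: H; apply/andP; split => //; lra.
split => //; apply/eqP; apply: contrapT => /negP nxz.
have ep : 0 < `|z - x| by rewrite normr_gt0 subr_eq0 eq_sym.
have [del del0 Hd] := pg.2 0 (in01_0 R) _ ep.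
set u := Num.min (del / 2) 1.
have u0 : 0 < u by rewrite lt_min divr_gt0 ?ltr01.
have u1 : u <= 1 by rewrite ge_min lexx orbT.
have ud : u < del.
  have : u <= del / 2 by rewrite ge_min lexx.
  lra.
have hu01 : 0 <= u <= 1 by rewrite (ltW u0) u1.
have Cgu := pg.1 u hu01.
have lg := legs u (introT andP (conj u0 u1)).
have hd0 : `|0 - u| < del by rewrite sub0r normrN gtr0_norm.
have dh := Hd u hu01 hd0.
move: Cgu lg dh; rewrite g0; case: (g u) => // m' x' i' s' /= [_ _ _ /andP [s'0 _]].
move=> /andP [h1 _]; move: h1 => /eqP exx; rewrite exx gtrDl => h.
by move: s'0; rewrite ltNge (ltW h).
Qed.

End Legs.

Lemma tri_base (R : realType) (V : normedModType R) t (e : nat -> V) N (p : ppoint R V) a b :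
  Pcarrier t e N p -> `|a - b| <= Pdist p (PBase a) + Pdist p (PBase b).
Proof.
case: p => [z|n x i s] /=.
  by move=> _; rewrite (distrC z a); exact: ler_distD.
move=> [_ _ _ /andP [s0 _]].
apply: (le_trans (ler_distD x a b)); rewrite (distrC a x).
have h1 := normr_ge0 (x - a); have h2 := normr_ge0 (x - b).
lra.
Qed.

Lemma aux_neg (R : realType) (c u K : R) : c < 0 -> 0 <= u -> 0 <= K -> c + u * - K < 0.
Proof. move=> c0 u0 K0; have : 0 <= u * K by rewrite mulr_ge0. lra. Qed.

Lemma aux_nat (R : realType) (c : R) (K1 K2 : nat) : (K1 < K2)%N ->
  1 <= `|(c - K1%:R) - (c - K2%:R)|.
Proof.
move=> h; have -> : (c - K1%:R) - (c - K2%:R) = K2%:R - K1%:R by ring.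
rewrite -natrB ?(ltnW h) // normr_nat ler1n subn_gt0 //.
Qed.

Lemma half_aux (R : realType) (s : R) : 0 < s -> s = s / 2 -> False.
Proof. by move=> *; lra. Qed.

Section Main.
Variables (R : realType) (V V' : normedModType R) (t : nat -> seq rat)
  (e : nat -> V) (N : set nat) (e' : nat -> V') (N' : set nat).
Hypotheses (te : type_enum t) (be : basic_seq e N) (ne : normalised e N)
  (be' : basic_seq e' N') (ne' : normalised e' N').
Local Notation C := (Pcarrier t e N).
Local Notation C' := (Pcarrier t e' N').
Local Notation d := (@Pdist R V).
Local Notation d' := (@Pdist R V').
Variables (T : ppoint R V -> ppoint R V') (g : ppoint R V' -> ppoint R V).
Hypotheses (TS : forall p, C p -> C' (T p)) (gS : forall q, C' q -> C (g q))
  (gT : forall p, C p -> g (T p) = p) (Tg : forall q, C' q -> T (g q) = q)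
  (Tc : metric_continuous C d d' T) (gc : metric_continuous C' d' d g).

Lemma Tinj p q : C p -> C q -> T p = T q -> p = q.
Proof. by move=> Cp Cq h; rewrite -(gT Cp) -(gT Cq) h. Qed.
Lemma ginj p q : C' p -> C' q -> g p = g q -> p = q.
Proof. by move=> Cp Cq h; rewrite -(Tg Cp) -(Tg Cq) h. Qed.

Lemma ray_onleg k c n0 x0 i0 s0 (K : nat) : N k -> (forall j, N j -> j = k) -> c < 0 ->
  T (PBase (c *: e k)) = PHair n0 x0 i0 s0 ->
  onleg x0 i0 (T (PBase ((c - K%:R) *: e k))).
Proof.
move=> Nk uk c0 Ty.
have cy : closed_span e N (c *: e k) by apply: mult_span.
have Ch : C' (PHair n0 x0 i0 s0) by rewrite -Ty; apply: TS.
have [n00 Tn0 _ _] := Ch.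
set ga := fun u : R => PBase (c *: e k + (u * - K%:R) *: e k) : ppoint R V.
have pga : ppath C d ga := arm_path t be ne (- K%:R) cy Nk.
have pTga := ppath_comp TS Tc pga.
have K0 : (0:R) <= K%:R by rewrite ler0n.
have key : forall u, 0 <= u <= 1 -> exists2 del, 0 < del &
   forall u', 0 <= u' <= 1 -> `|u - u'| < del ->
     onleg x0 i0 (T (ga u')) = onleg x0 i0 (T (ga u)).
  move=> u hu; have /andP [u0 u1] := hu.
  have cu := aux_neg c0 u0 K0.
  have gau : ga u = PBase ((c + u * - K%:R) *: e k) by rewrite /ga scalerDl.
  have Cgu : C (ga u) by exact: pga.1.
  case Tu : (T (ga u)) => [z|m x i s].
  - case: (eqVneq z x0) => [zx|zx].
      exfalso.
      have Tn : Tset t e' N' n0 z by rewrite zx.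
      have Cz : C' (PBase z) by rewrite -Tu; apply: TS.
      have tri : forall del, 0 < del -> triod_in C' d' (pball C' d' (PBase z) del).
        by move=> del del0; apply: (root_triod te be' ne' n00 Tn del0).
      have r0 : 0 < - (c + u * - K%:R) by rewrite oppr_gt0.
      have := triod_transfer gS ginj gc Cz r0 tri.
      rewrite -Tu gT // gau.
      exact: (ray_no_triod te be ne Nk uk cu).
    have ep : 0 < `|z - x0| by rewrite normr_gt0 subr_eq0.
    have [del del0 Hd] := pTga.2 u hu _ ep.
    exists del => // u' hu' h; have := Hd u' hu' h; rewrite /= Tu.
    have Cu' : C' (T (ga u')) by apply: TS; exact: pga.1.
    move: Cu'; case: (T (ga u')) => // m' x' i' s' [_ _ _ /andP [s'0 _]].
    rewrite /= andbC; case: eqP => //= _; case: eqP => // -> h2.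
    by exfalso; move: h2; rewrite gtrDl ltNge (ltW s'0).
  - have [del del0 Hd] := hair_loc te be' pTga hu Tu.
    exists del => // u' hu' h; have [s' hs'] := Hd u' hu' h.
    by rewrite /= in hs'; rewrite hs'.
have := loc_const_ab ler01 key.
have -> : ga 0 = PBase (c *: e k) by rewrite /ga arm0.
rewrite Ty /= !eqxx => h.
have -> : PBase ((c - K%:R) *: e k) = ga 1 by rewrite /ga mul1r -scalerDl.
by rewrite -h.
Qed.


Lemma fin_aux (a x y : R) : 1 <= a -> a <= x + y -> x < 2^-1 -> y < 2^-1 -> False.
Proof. by move=> *; lra. Qed.

Lemma ray_case k c n0 x0 i0 s0 : N k -> (forall j, N j -> j = k) -> c < 0 ->
  T (PBase (c *: e k)) = PHair n0 x0 i0 s0 -> False.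
Proof.
move=> Nk uk c0 Ty.
have Ch : C' (PHair n0 x0 i0 s0) by rewrite -Ty; apply: TS; apply: mult_span.
have [n00 Tn0 i0n _] := Ch.
set y := fun K : nat => PBase ((c - K%:R) *: e k) : ppoint R V.
have Cy : forall K, C (y K) by move=> K; apply: mult_span.
set s := fun K => scoord (T (y K)).
have hs : forall K, exists m, T (y K) = PHair m x0 i0 (s K).
  move=> K; have := ray_onleg K Nk uk c0 Ty; rewrite /s /y.
  case: (T _) => // m x i s1 /andP [/eqP -> /eqP ->]; by exists m.
have sb : forall K, 0 < s K <= 1.
  move=> K; have := TS (Cy K); have [m ->] := hs K.
  by case.
have [f [l [fi [l01 Hl]]]] := bw01 sb.
set qs := if l == 0 then PBase x0 else PHair n0 x0 i0 l.
have Cqs : C' qs.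
  rewrite /qs; case: eqP => [_|/eqP ln0] /=; first by case: Tn0.
  split => //; move/andP: l01 => [l0 l1].
  by rewrite l1 andbT lt_neqAle eq_sym ln0.
have dq : forall K, d' qs (T (y K)) <= `|l - s K|.
  move=> K; have [m ->] := hs K; rewrite /qs; case: eqP => [->|_] /=.
    have /andP [sK0 _] := sb K.
    by rewrite subrr normr0 add0r sub0r normrN gtr0_norm.
  by rewrite !eqxx.
have h2 : (0:R) < 2^-1 by rewrite invr_gt0 ltr0n.
have [del del0 Hd] := gc Cqs h2.
have [J HJ] := Hl del del0.
have e1 := Hd (T (y (f J))) (TS (Cy _)) (le_lt_trans (dq _) (HJ J (leqnn J))).
have e2 := Hd (T (y (f J.+1))) (TS (Cy _)) (le_lt_trans (dq _) (HJ J.+1 (leqnSn J))).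
rewrite !gT // in e1 e2.
have := tri_base ((c - (f J)%:R) *: e k) ((c - (f J.+1)%:R) *: e k) (gS Cqs).
rewrite -scalerBl normrZ (ne Nk) mulr1 => htri.
exact: fin_aux (aux_nat c (fi J)) htri e1 e2.
Qed.


Lemma dim0_pt p : (forall k, ~ N k) -> C p -> p = PBase 0.
Proof.
move=> n0N; case: p => [z|n x i s] /=.
  by move=> cz; rewrite (dim0_zero be n0N cz).
move=> [n00 [_ hx] _ _].
by exfalso; apply: (dim0_notype n0N (tn_type te n00) hx).
Qed.

Lemma base_base y : C (PBase y) -> exists z, T (PBase y) = PBase z.
Proof.
move=> Cy; case Ty: (T (PBase y)) => [z|n x i s]; first by exists z.
exfalso.
have Ch : C' (PHair n x i s) by rewrite -Ty; apply: TS.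
have s0 : 0 < s by case: Ch => _ _ _ /andP [].
have nt := hair_no_triod te be' Ch.
have trans : (forall del, 0 < del -> triod_in C d (pball C d (PBase y) del)) -> False.
  move=> H; apply: nt; rewrite -Ty; exact: (triod_transfer TS Tinj Tc Cy s0 H).
have [[a [b [Na Nb ab]]]|[[k [Nk uk]]|n0N]] := N_cases N.
- by apply: trans => del del0; exact: (X_triod2 t be ne Na Nb ab Cy del0).
- have [c yc] := dim1_line be Nk uk Cy.
  case: (ltP c 0) => [c0|c0].
  + by rewrite yc in Ty; exact: (ray_case Nk uk c0 Ty).
  + by apply: trans => del del0; rewrite yc; exact: (X_triod1 te be ne Nk uk c0 del0).
- have Cq : C' (PHair n x i (s / 2)).
    case: Ch => [n00 Tn iN /andP [_ s1]]; split => //.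
    by apply/andP; split; [rewrite divr_gt0|lra].
  have gq := dim0_pt n0N (gS Cq).
  have y0 := dim0_pt n0N Cy.
  have := Tg Cq; rewrite gq -y0 Ty => -[].
  exact: half_aux s0.
Qed.

End Main.

Lemma convex_aux (R : realType) (s1 s2 u : R) : 0 < s1 <= 1 -> 0 < s2 <= 1 -> 0 <= u <= 1 ->
  0 < s1 + u * (s2 - s1) <= 1.
Proof.
move=> /andP [h1 h2] /andP [h3 h4] /andP [h5 h6]; apply/andP; split; nra.
Qed.

Section Main2.
Variables (R : realType) (V V' : normedModType R) (t : nat -> seq rat)
  (e : nat -> V) (N : set nat) (e' : nat -> V') (N' : set nat).
Hypotheses (te : type_enum t) (be : basic_seq e N) (ne : normalised e N)
  (be' : basic_seq e' N') (ne' : normalised e' N').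
Local Notation C := (Pcarrier t e N).
Local Notation C' := (Pcarrier t e' N').
Local Notation d := (@Pdist R V).
Local Notation d' := (@Pdist R V').
Variables (T : ppoint R V -> ppoint R V') (g : ppoint R V' -> ppoint R V).
Hypotheses (TS : forall p, C p -> C' (T p)) (gS : forall q, C' q -> C (g q))
  (gT : forall p, C p -> g (T p) = p) (Tg : forall q, C' q -> T (g q) = q)
  (Tc : metric_continuous C d d' T) (gc : metric_continuous C' d' d g).

Let baseT y (Cy : C (PBase y)) := base_base te be ne be' ne' TS gS gT Tg Tc gc Cy.
Let baseg z (Cz : C' (PBase z)) := base_base te be' ne' be ne gS TS Tg gT gc Tc Cz.

Lemma hairT p : C p -> ishair p -> ishair (T p).
Proof.
move=> Cp [n [x [i [s ep]]]]; case Tp: (T p) => [z|m x' i' s']; last by exists m, x', i', s'.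
have Cz : C' (PBase z) by rewrite -Tp; exact: TS.
have [w gz] := baseg Cz.
by move: gz; rewrite -Tp gT // ep.
Qed.

Lemma hairg q : C' q -> ishair q -> ishair (g q).
Proof.
move=> Cq [n [x [i [s ep]]]]; case gq: (g q) => [z|m x' i' s']; last by exists m, x', i', s'.
have Cz : C (PBase z) by rewrite -gq; exact: gS.
have [w Tz] := baseT Cz.
by move: Tz; rewrite -gq Tg // ep.
Qed.

Lemma leg_image n x i z : (0 < n)%N -> Tset t e N n x -> (i < n)%N ->
  T (PBase x) = PBase z ->
  exists m j s, [/\ T (PHair n x i 1) = PHair m z j s, (0 < m)%N, Tset t e' N' m z,
                    (j < m)%N & 0 < s <= 1].
Proof.
move=> n0 Tn iN Tx.
set ga := fun u : R => if u == 0 then PBase x else PHair n x i u : ppoint R V.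
have pga : ppath C d ga := leg_path n0 Tn iN.
have pTga := ppath_comp TS Tc pga.
have Cga := pga.1.
case T1 : (T (PHair n x i 1)) => [w|m x' j s].
  have : ishair (T (PHair n x i 1)).
    apply: hairT; last by exists n, x, i, 1.
    by have := Cga 1 (in01_1 R); rewrite /ga oner_eq0.
  by rewrite T1 => -[? [? [? [? ?]]]].
have h0 : (T \o ga) 0 = PBase z by rewrite /= /ga eqxx.
have h1 : (T \o ga) 1 = PHair m x' j s by rewrite /= /ga oner_eq0.
have hh : forall u, 0 < u <= 1 -> ishair ((T \o ga) u).
  move=> u /andP [u0 u1]; apply: hairT.
    by apply: Cga; rewrite (ltW u0) u1.
  by rewrite /ga (gt_eqF u0); exists n, x, i, u.
have [ex _] := path_root te be' pTga h0 hh h1.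
subst x'.
have := TS (Cga 1 (in01_1 R)); rewrite /ga /= oner_eq0 T1 => -[m0 Tm jm s01].
by exists m, j, s.
Qed.


Lemma legs_le n x m z : (0 < n)%N -> Tset t e N n x -> (0 < m)%N -> Tset t e' N' m z ->
  T (PBase x) = PBase z -> (n <= m)%N.
Proof.
move=> n0 Tn m0 Tm Tx.
set F := fun i : 'I_n => match T (PHair n x i 1) with PHair _ _ j _ => j | _ => 0%N end.
have legF : forall i : 'I_n, exists s,
    [/\ T (PHair n x i 1) = PHair m z (F i) s, (F i < m)%N & 0 < s <= 1].
  move=> i; have [m' [j [s [e1 m'0 Tm' jm s01]]]] := leg_image n0 Tn (ltn_ord i) Tx.
  have mm := Tset_uniq te be' m'0 m0 Tm' Tm; subst m'.
  by exists s; rewrite /F e1.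
have CH : forall i : 'I_n, C (PHair n x i 1).
  by move=> i; split => //; rewrite ?ltr01 ?lexx.
have Finj : injective F.
  move=> i1 i2 hF; apply: val_inj => /=.
  have [s1 [e1 _ s1b]] := legF i1; have [s2 [e2 F2 s2b]] := legF i2.
  rewrite hF in e1.
  set de := fun u : R => PHair m z (F i2) (s1 + u * (s2 - s1)) : ppoint R V'.
  have pde : ppath C' d' de.
    apply: (@lip_path _ _ _ _ _ _ `|s2 - s1|) => //.
      by move=> u hu; split => //; apply: convex_aux.
    move=> u u' _ _; rewrite /= !eqxx.
    have -> : s1 + u * (s2 - s1) - (s1 + u' * (s2 - s1)) = (s2 - s1) * (u - u') by ring.
    by rewrite normrM.
  have pgde := ppath_comp gS gc pde.
  have hh : forall u, 0 <= u <= 1 -> ishair ((g \o de) u).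
    by move=> u hu; apply: hairg; [exact: pde.1|exists m, z, (F i2), (s1 + u * (s2 - s1))].
  have := leg_const te be x i1 pgde (lexx 0) ler01 (lexx 1) hh.
  rewrite /= /de mul0r addr0 mul1r addrC subrK -e1 -e2 !gT // /= !eqxx /=.
  by move/esym/eqP.
have := @uniq_leq_size _ (map F (enum 'I_n)) (iota 0 m).
rewrite size_map size_enum_ord size_iota; apply.
  by rewrite (map_inj_uniq Finj) enum_uniq.
move=> j /mapP [i _ ->]; rewrite mem_iota add0n.
by have [s [_ h _]] := legF i.
Qed.

End Main2.

Section Main3.
Variables (R : realType) (V V' : normedModType R) (t : nat -> seq rat)
  (e : nat -> V) (N : set nat) (e' : nat -> V') (N' : set nat).
Hypotheses (te : type_enum t) (be : basic_seq e N) (ne : normalised e N)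
  (be' : basic_seq e' N') (ne' : normalised e' N').
Local Notation C := (Pcarrier t e N).
Local Notation C' := (Pcarrier t e' N').
Local Notation d := (@Pdist R V).
Local Notation d' := (@Pdist R V').
Variables (T : ppoint R V -> ppoint R V') (g : ppoint R V' -> ppoint R V).
Hypotheses (TS : forall p, C p -> C' (T p)) (gS : forall q, C' q -> C (g q))
  (gT : forall p, C p -> g (T p) = p) (Tg : forall q, C' q -> T (g q) = q)
  (Tc : metric_continuous C d d' T) (gc : metric_continuous C' d' d g).

Lemma root_forward n x : (0 < n)%N -> Tset t e N n x -> C (PBase x) ->
  exists m z, [/\ (0 < m)%N, Tset t e' N' m z & T (PBase x) = PBase z].
Proof.
move=> n0 Tn Cx.
have [z Tx] := base_base te be ne be' ne' TS gS gT Tg Tc gc Cx.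
have [m [j [s [_ m0 Tm _ _]]]] := leg_image te be ne be' ne' TS gS gT Tg Tc gc n0 Tn n0 Tx.
by exists m, z.
Qed.

Lemma pt_forward n x : (0 < n)%N -> Tset t e N n x -> C (PBase x) ->
  exists z, Tset t e' N' n z /\ T (PBase x) = PBase z.
Proof.
move=> n0 Tn Cx.
have [m [z [m0 Tm Tx]]] := root_forward n0 Tn Cx.
have le1 := legs_le te be ne be' ne' TS gS gT Tg Tc gc n0 Tn m0 Tm Tx.
have gz : g (PBase z) = PBase x by rewrite -Tx gT.
have le2 := legs_le te be' ne' be ne gS TS Tg gT gc Tc m0 Tm n0 Tn gz.
have -> : n = m by apply/eqP; rewrite eqn_leq le1 le2.
by exists z.
Qed.

End Main3.

Unset Implicit Arguments.

Theorem mainTheorem10 (R : realType)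
  (V V' : completeNormedModType R) (t : nat -> seq rat)
  (e : nat -> V) (N : set nat) (e' : nat -> V') (N' : set nat)
  (T : ppoint R V -> ppoint R V') :
  type_enum t ->
  nbu_basic_seq e N -> nbu_basic_seq e' N' ->
  homeomorphism (Pcarrier t e N) (@Pdist R V)
                (Pcarrier t e' N') (@Pdist R V') T ->
  [/\ T @` Pbase t e N = Pbase t e' N',
      T @` Phair t e N = Phair t e' N',
      T @` Proots t e N = Proots t e' N'
    & forall n, (0 < n)%N -> T @` PT t e N n = PT t e' N' n].
Proof.
rewrite /homeomorphism /nbu_basic_seq.
move=> te [be ne _ _] [be' ne' _ _] [TS [g [gS gT Tg Tc gc]]].
split.
- apply/seteqP; split.
    move=> q [p [Cp [y ep]] <-]; subst p; split; first exact: TS.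
    exact: (base_base te be ne be' ne' TS gS gT Tg Tc gc Cp).
  move=> q [Cq [z ez]]; subst q; exists (g (PBase z)); last exact: Tg.
  split; first exact: gS.
  exact: (base_base te be' ne' be ne gS TS Tg gT gc Tc Cq).
- apply/seteqP; split.
    move=> q [p [Cp hp] <-]; split; first exact: TS.
    exact: (hairT te be ne be' ne' TS gS gT Tg Tc gc Cp hp).
  move=> q [Cq hq]; exists (g q); last exact: Tg.
  split; first exact: gS.
  exact: (hairT te be' ne' be ne gS TS Tg gT gc Tc Cq hq).
- apply/seteqP; split.
    move=> q [p [Cp [n [x [n0 [Tn ep]]]]] <-]; subst p.
    have [m [z [m0 Tm Tx]]] := root_forward te be ne be' ne' TS gS gT Tg Tc gc n0 Tn Cp.
    split; first exact: TS.
    by exists m, z; rewrite Tx.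
  move=> q [Cq [m [z [m0 [Tm ez]]]]]; subst q.
  have [n [x [n0 Tn gz]]] := root_forward te be' ne' be ne gS TS Tg gT gc Tc m0 Tm Cq.
  exists (PBase x); last by rewrite -gz Tg.
  by split; [rewrite -gz; exact: gS|exists n, x].
- move=> n n0; apply/seteqP; split.
    move=> q [p [Cp [x [Tn ep]]] <-]; subst p.
    have [z [Tz Tx]] := pt_forward te be ne be' ne' TS gS gT Tg Tc gc n0 Tn Cp.
    by split; [exact: TS|exists z; rewrite Tx].
  move=> q [Cq [z [Tz ez]]]; subst q.
  have [x [Tx gz]] := pt_forward te be' ne' be ne gS TS Tg gT gc Tc n0 Tz Cq.
  exists (PBase x); last by rewrite -gz Tg.
  by split; [rewrite -gz; exact: gS|exists x].
Qed.
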